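(* Let $a,b,c$ be positive integers. For any non-negative integers $m,n$, in $\mathfrak{H}^1$ we have \[d(z_c^mz_bz_a^n)=\sum_{k=0}^m\sum_{l=0}^n(-1)^{k+l}\,z_a^lz_bz_c^k*d(z_c^{m-k})*d(z_a^{n-l}).\]
   Context: $\mathfrak{H}=\mathbb{Q}\langle x,y\rangle$ is the non-commutative polynomial algebra in two indeterminates, and $\mathfrak{H}^1=\mathbb{Q}+\mathfrak{H}y$. Put $z_k=x^{k-1}y$ for $k\geq 1$. Let $\gamma$ be the algebra automorphism of $\mathfrak{H}$ with $\gamma(x)=x$, $\gamma(y)=x+y$, and let $d\colon\mathfrak{H}^1\to\mathfrak{H}^1$ be the $\mathbb{Q}$-linear map with $d(1)=1$ and $d(wy)=\gamma(w)y$ for every word $w\in\mathfrak{H}$. The harmonic product $*$ is the $\mathbb{Q}$-bilinear product on $\mathfrak{H}^1$ defined inductively by $1*w=w*1=w$ and $z_kw*z_lw'=z_k(w*z_lw')+z_l(z_kw*w')+z_{k+l}(w*w')$ for $k,l\geq 1$, $w,w'\in\mathfrak{H}^1$; it is commutative and associative. Powers $z_c^m$ denote concatenation powers (words). *)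

(* Defs.v *)
From mathcomp Require Import all_boot all_order all_algebra.
Set Implicit Arguments. Unset Strict Implicit. Unset Printing Implicit Defensive.
Import GRing.Theory Num.Theory.
Local Open Scope ring_scope.

Definition word := seq bool.
Definition lx : bool := false.
Definition ly : bool := true.

(* Elements of H = Q<x,y>: finite formal Q-linear combinations of words,
   represented as lists of (coefficient, word); two representations denote
   the same element iff all their coefficients agree (see [peq]). *)
Definition poly := seq (rat * word).

Definition coef (p : poly) (w : word) : rat :=
  \sum_(cw <- p | cw.2 == w) cw.1.

Definition peq (p q : poly) : Prop := forall w : word, coef p w = coef q w.

Definition pone : poly := [:: (1, [::])].
Definition pword (w : word) : poly := [:: (1, w)].
Definition padd (p q : poly) : poly := p ++ q.
Definition pscale (a : rat) (p : poly) : poly := [seq (a * cw.1, cw.2) | cw <- p].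
Definition pmul (p q : poly) : poly :=
  [seq (cw.1 * dv.1, cw.2 ++ dv.2) | cw <- p, dv <- q].
Definition psum (ps : seq poly) : poly := flatten ps.

Definition z (k : nat) : word := rcons (nseq k.-1 lx) ly.
Definition zpow (k m : nat) : word := flatten (nseq m (z k)).

Definition gamma_letter (b : bool) : poly :=
  if b then [:: (1, [:: lx]); (1, [:: ly])] else [:: (1, [:: lx])].
Definition gamma_word (w : word) : poly :=
  foldr (fun b acc => pmul (gamma_letter b) acc) pone w.

(* d on words of H^1: d(1) = 1, d(w y) = gamma(w) y.
   (Words ending in x are not in H^1; d is never applied to them below,
   we send them to 0.) *)
Definition d_word (w : word) : poly :=
  if w == [::] then pone
  else if last lx w then pmul (gamma_word (take (size w).-1 w)) (pword [:: ly])
  else [::].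
Definition d (p : poly) : poly := flatten [seq pscale cw.1 (d_word cw.2) | cw <- p].

(* Decomposition of a word of H^1 as z_{k1} ... z_{kr} (index sequence). *)
Fixpoint toz_aux (n : nat) (w : word) : seq nat :=
  match w with
  | [::] => [::]
  | b :: w' => if b then n.+1 :: toz_aux 0 w' else toz_aux n.+1 w'
  end.
Definition toz (w : word) : seq nat := toz_aux 0 w.
Definition fromz (s : seq nat) : word := flatten (map z s).

(* Harmonic (stuffle) product on index sequences:
   z_k u * z_l v = z_k (u * z_l v) + z_l (z_k u * v) + z_{k+l} (u * v). *)
Fixpoint stuffle (u : seq nat) : seq nat -> seq (rat * seq nat) :=
  match u with
  | [::] => fun v => [:: (1, v)]
  | k :: u' =>
      fix st2 (v : seq nat) : seq (rat * seq nat) :=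
        match v with
        | [::] => [:: (1, k :: u')]
        | l :: v' =>
            [seq (e.1, k :: e.2) | e <- stuffle u' v]
            ++ [seq (e.1, l :: e.2) | e <- st2 v']
            ++ [seq (e.1, (k + l)%N :: e.2) | e <- stuffle u' v']
        end
  end.

Definition harm (p q : poly) : poly :=
  flatten [seq [seq (cw.1 * dv.1 * e.1, fromz e.2) | e <- stuffle (toz cw.2) (toz dv.2)]
          | cw <- p, dv <- q].

(* Main.v *)
Require Import Defs.
From mathcomp Require Import all_boot all_order all_algebra.
Import GRing.Theory Num.Theory.
Local Open Scope ring_scope.
From HB Require Import structures.
From mathcomp Require Import finmap.
From mathcomp Require Import monalg.
From mathcomp Require Import zify.


HB.lock Definition lin {K : choiceType} {V : lmodType rat} (h : K -> V)
  (g : {malg rat[K]}) : V := \sum_(k <- msupp g) g@_k *: h k.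

Section Lin.
Context {K : choiceType} {V : lmodType rat}.
Implicit Types (g : {malg rat[K]}) (h : K -> V).


Lemma linEw h {d : {fset K}} {g} : (msupp g `<=` d)%fset ->
  lin h g = \sum_(k <- d) g@_k *: h k.
Proof.
move=> le; rewrite lin.unlock [LHS](big_fset_incl _ le) => //= x xd /mcoeff_outdom ->.
by rewrite scale0r.
Qed.

Lemma linD h g1 g2 : lin h (g1 + g2) = lin h g1 + lin h g2.
Proof.
have le := msuppD_le g1 g2.
rewrite (linEw h le) (linEw h (fsubsetUl (msupp g1) (msupp g2))) (linEw h (fsubsetUr (msupp g1) (msupp g2))) -big_split.
by apply: eq_bigr => k _; rewrite mcoeffD scalerDl.
Qed.

Lemma linZ h a g : lin h (a *: g) = a *: lin h g.
Proof.
rewrite (linEw h (msuppZ_le a g)) lin.unlock scaler_sumr; apply: eq_bigr => k _.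
by rewrite mcoeffZ scalerA.
Qed.

Lemma lin0 h : lin h 0 = 0.
Proof. by rewrite lin.unlock msupp0 big_seq_fset0. Qed.

Lemma linU h c k : lin h << c *g k >> = c *: h k.
Proof. by rewrite (linEw h msuppU_le) big_seq_fset1 mcoeffUU. Qed.

Lemma linU1 h k : lin h << k >> = h k.
Proof. by rewrite linU scale1r. Qed.
End Lin.

Section IsLin.
Context {K : choiceType} {V : lmodType rat}.
Definition islin (f : {malg rat[K]} -> V) :=
  forall a x y, f (a *: x + y) = a *: f x + f y.

Lemma lin_islin (h : K -> V) : islin (lin h).
Proof. by move=> a x y; rewrite linD linZ. Qed.

Variable f : {malg rat[K]} -> V.
Hypothesis hf : islin f.
Lemma islin0 : f 0 = 0.
Proof.
have h := hf 1 0 0; rewrite !scale1r addr0 in h.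
by apply: (addrI (f 0)); rewrite addr0 -h.
Qed.
Lemma islinD x y : f (x + y) = f x + f y.
Proof. by have := hf 1 x y; rewrite !scale1r. Qed.
Lemma islinZ a x : f (a *: x) = a *: f x.
Proof. by have := hf a x 0; rewrite !addr0 islin0 addr0. Qed.
Lemma islinN x : f (- x) = - f x.
Proof. by have := islinZ (-1) x; rewrite !scaleN1r. Qed.
Lemma islinB x y : f (x - y) = f x - f y.
Proof. by rewrite islinD islinN. Qed.
Lemma islin_sum (I : Type) (r : seq I) (P : pred I) (F : I -> {malg rat[K]}) :
  f (\sum_(i <- r | P i) F i) = \sum_(i <- r | P i) f (F i).
Proof.
elim: r => [|x r IH]; first by rewrite !big_nil islin0.
by rewrite !big_cons; case: (P x); rewrite ?islinD IH.
Qed.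
End IsLin.
Arguments islin0 {K V f}.
Arguments islinD {K V f}.
Arguments islinZ {K V f}.
Arguments islinN {K V f}.
Arguments islinB {K V f}.
Arguments islin_sum {K V f}.

Lemma malgUZ {K : choiceType} (c : rat) (k : K) : << c *g k >> = c *: << k >>.
Proof. by apply/malgP => k'; rewrite mcoeffZ !mcoeffU mulr_natr. Qed.

Lemma islin_eq {K : choiceType} {V : lmodType rat} (f g : {malg rat[K]} -> V) :
  islin f -> islin g -> (forall k, f << k >> = g << k >>) -> forall x, f x = g x.
Proof.
move=> hf hg e x; rewrite (monalgE x) (islin_sum hf) (islin_sum hg).
by apply: eq_bigr => k _; rewrite malgUZ (islinZ hf) (islinZ hg) e.
Qed.

Lemma islin_comp {K K' : choiceType} {V : lmodType rat}
  {f : {malg rat[K']} -> V} {g : {malg rat[K]} -> {malg rat[K']}} :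
  islin f -> islin g -> islin (fun x => f (g x)).
Proof. by move=> hf hg a x y; rewrite hg hf. Qed.

Lemma islin_add {K : choiceType} {V : lmodType rat} {f g : {malg rat[K]} -> V} :
  islin f -> islin g -> islin (fun x => f x + g x).
Proof.
by move=> hf hg a x y; rewrite hf hg scalerDr addrACA.
Qed.

Lemma lin_id {K : choiceType} (x : {malg rat[K]}) : lin (fun k => << k >>) x = x.
Proof.
apply: (islin_eq _ id (lin_islin _)) => [a u v //|k]; exact: linU1.
Qed.

Notation M := {malg rat[seq nat]}.

HB.lock Definition st (u v : seq nat) : M := \sum_(e <- stuffle u v) e.1 *: << e.2 >>.
HB.lock Definition cns (k : nat) : M -> M := lin (fun s => << k :: s >>).
HB.lock Definition sh (F G : M) : M := lin (fun u => lin (fun v => st u v) G) F.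

Lemma cns_lin k : islin (cns k).
Proof. rewrite cns.unlock; exact: lin_islin. Qed.

Lemma cnsU k s : cns k << s >> = << k :: s >>.
Proof. rewrite cns.unlock; exact: linU1. Qed.

Lemma cns_map k (r : seq (rat * seq nat)) :
  cns k (\sum_(e <- r) e.1 *: << e.2 >>) =
  \sum_(e <- [seq (e.1, k :: e.2) | e <- r]) e.1 *: << e.2 >>.
Proof.
rewrite (islin_sum (cns_lin k)) big_map; apply: eq_bigr => e _.
by rewrite (islinZ (cns_lin k)) cnsU.
Qed.

Lemma st_nill v : st [::] v = << v >>.
Proof. by rewrite st.unlock /= big_cons big_nil addr0 scale1r. Qed.

Lemma st_nilr u : st u [::] = << u >>.
Proof. by case: u => [|k u]; rewrite st.unlock /= big_cons big_nil addr0 scale1r. Qed.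

Lemma st_cons k u l v :
  st (k :: u) (l :: v) = cns k (st u (l :: v)) + cns l (st (k :: u) v)
                         + cns (k + l) (st u v).
Proof. by rewrite st.unlock /= !cns_map !big_cat /= addrA. Qed.

Lemma lin_fun {K : choiceType} {V : lmodType rat} (a : rat) (h1 h2 : K -> V) g :
  lin (fun k => a *: h1 k + h2 k) g = a *: lin h1 g + lin h2 g.
Proof.
rewrite lin.unlock scaler_sumr -big_split; apply: eq_bigr => k _.
by rewrite scalerDr !scalerA mulrC.
Qed.

Lemma eq_lin {K : choiceType} {V : lmodType rat} (h1 h2 : K -> V) g :
  (forall k, h1 k = h2 k) -> lin h1 g = lin h2 g.
Proof. by move=> e; rewrite lin.unlock; apply: eq_bigr => k _; rewrite e. Qed.

Lemma sh_linl G : islin (fun F => sh F G).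
Proof. rewrite sh.unlock; exact: lin_islin. Qed.

Lemma sh_linr F : islin (sh F).
Proof.
move=> a x y; rewrite sh.unlock -lin_fun; apply: eq_lin => u.
by rewrite linD linZ.
Qed.

Lemma shU u G : sh << u >> G = lin (st u) G.
Proof. by rewrite sh.unlock linU1. Qed.

Lemma shUU u v : sh << u >> << v >> = st u v.
Proof. by rewrite shU linU1. Qed.

Lemma sh1l G : sh << [::] >> G = G.
Proof.
rewrite shU -[RHS]lin_id; apply: eq_lin => v; exact: st_nill.
Qed.

Lemma sh1r F : sh F << [::] >> = F.
Proof.
rewrite sh.unlock -[RHS]lin_id; apply: eq_lin => u; rewrite linU1; exact: st_nilr.
Qed.

Lemma shC_st u v : st u v = st v u.
Proof.
move: {2}(size u + size v)%N (leqnn (size u + size v)%N) => n.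
elim: n u v => [|n IH] [|k u] [|l v] hs; rewrite ?st_nill ?st_nilr //.
rewrite !st_cons.
have h1 : (size u + size (l :: v) <= n)%N by move: hs; rewrite /= addSn ltnS.
have h2 : (size (k :: u) + size v <= n)%N by move: hs; rewrite /= addnS ltnS.
have h3 : (size u + size v <= n)%N by apply: leq_trans h1; rewrite /= leq_add2l.
rewrite (IH u (l :: v) h1) (IH (k :: u) v h2) (IH u v h3).
rewrite [(l + k)%N]addnC.
by rewrite [cns k _ + cns l _]addrC.
Qed.

Lemma sh_cons k l F G :
  sh (cns k F) (cns l G) = cns k (sh F (cns l G)) + cns l (sh (cns k F) G)
                           + cns (k + l) (sh F G).
Proof.
move: F; apply: (islin_eq (fun F => sh (cns k F) (cns l G))
  (fun F => cns k (sh F (cns l G)) + cns l (sh (cns k F) G) + cns (k + l) (sh F G))).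
- exact: (islin_comp (sh_linl _) (cns_lin k)).
- apply: islin_add; [apply: islin_add|].
  + exact: (islin_comp (cns_lin k) (sh_linl _)).
  + exact: (islin_comp (cns_lin l) (islin_comp (sh_linl _) (cns_lin k))).
  + exact: (islin_comp (cns_lin _) (sh_linl _)).
move=> u; rewrite cnsU; move: G.
apply: (islin_eq (fun G => sh << k :: u >> (cns l G))
  (fun G => cns k (sh << u >> (cns l G)) + cns l (sh << k :: u >> G) + cns (k + l) (sh << u >> G))).
- exact: (islin_comp (sh_linr _) (cns_lin l)).
- apply: islin_add; [apply: islin_add|].
  + exact: (islin_comp (cns_lin k) (islin_comp (sh_linr _) (cns_lin l))).
  + exact: (islin_comp (cns_lin l) (sh_linr _)).
  + exact: (islin_comp (cns_lin _) (sh_linr _)).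
move=> v; rewrite !cnsU !shUU; exact: st_cons.
Qed.

Lemma shC F G : sh F G = sh G F.
Proof.
move: F; apply: (islin_eq (fun F => sh F G) (fun F => sh G F)).
- exact: sh_linl.
- exact: sh_linr.
move=> u; move: G; apply: (islin_eq (fun G => sh << u >> G) (fun G => sh G << u >>)).
- exact: sh_linr.
- exact: sh_linl.
move=> v; rewrite !shUU; exact: shC_st.
Qed.

Lemma G9 (V : zmodType) (a1 a2 a3 b1 b2 b3 c1 c2 c3 : V) :
  a1 + a2 + a3 + (b1 + b2 + b3) + (c1 + c2 + c3) =
  a1 + (a2 + b2 + c2) + a3 + b1 + b3 + c1 + c3.
Proof.
pose f i := nth 0 [:: a1; a2; a3; b1; b2; b3; c1; c2; c3] i.
transitivity (\sum_(i <- [:: 0; 1; 2; 3; 4; 5; 6; 7; 8]%N) f i).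
  by rewrite !big_cons big_nil /f /= addr0 !addrA.
rewrite (perm_big [:: 0; 1; 4; 7; 2; 3; 5; 6; 8]%N) //.
by rewrite !big_cons big_nil /f /= addr0 !addrA.
Qed.

Lemma G9' (V : zmodType) (a1 a2 a3 b1 b2 b3 c1 c2 c3 : V) :
  a1 + a2 + a3 + (b1 + b2 + b3) + (c1 + c2 + c3) =
  (a1 + b1 + c1) + b2 + b3 + a2 + c2 + a3 + c3.
Proof.
pose f i := nth 0 [:: a1; a2; a3; b1; b2; b3; c1; c2; c3] i.
transitivity (\sum_(i <- [:: 0; 1; 2; 3; 4; 5; 6; 7; 8]%N) f i).
  by rewrite !big_cons big_nil /f /= addr0 !addrA.
rewrite (perm_big [:: 0; 3; 6; 4; 5; 1; 7; 2; 8]%N) //.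
by rewrite !big_cons big_nil /f /= addr0 !addrA.
Qed.

Lemma shA_w u v w : sh (sh << u >> << v >>) << w >> = sh << u >> (sh << v >> << w >>).
Proof.
move: {2}(size u + size v + size w)%N (leqnn (size u + size v + size w)%N) => n.
elim: n u v w => [|n IH] u v w hs.
  by case: u v w hs => [|? ?] [|? ?] [|? ?] //= _; rewrite !sh1l.
case: u hs => [|k u] hs; first by rewrite !sh1l.
case: v hs => [|l v] hs; first by rewrite sh1l sh1r.
case: w hs => [|m w] hs; first by rewrite !sh1r.
have IH' a b c : (size a + size b + size c <= n)%N ->
  sh (sh << a >> << b >>) << c >> = sh << a >> (sh << b >> << c >>) by exact: IH.
rewrite -[<< k :: u >>](cnsU k) -[<< l :: v >>](cnsU l) -[<< m :: w >>](cnsU m).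
rewrite [sh (cns k _) (cns l _)]sh_cons [sh (cns l _) (cns m _)]sh_cons.
rewrite !(islinD (sh_linl _)) !(islinD (sh_linr _)) !sh_cons.
rewrite G9 G9'.
rewrite -!(islinD (cns_lin m)) -!(islinD (sh_linl _)) -(sh_cons k l).
rewrite -!(islinD (cns_lin k)) -!(islinD (sh_linr _)) -(sh_cons l m).
rewrite !cnsU addnA.
move: hs => /= hs.
rewrite !IH' //=; lia.
Qed.

Lemma shA F G H : sh (sh F G) H = sh F (sh G H).
Proof.
move: F; apply: (islin_eq (fun F => sh (sh F G) H) (fun F => sh F (sh G H))).
- exact: (islin_comp (sh_linl _) (sh_linl _)).
- exact: sh_linl.
move=> u; move: G; apply: (islin_eq (fun G => sh (sh << u >> G) H) (fun G => sh << u >> (sh G H))).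
- exact: (islin_comp (sh_linl _) (sh_linr _)).
- exact: (islin_comp (sh_linr _) (sh_linl _)).
move=> v; move: H; apply: (islin_eq (fun H => sh (sh << u >> << v >>) H) (fun H => sh << u >> (sh << v >> H))).
- exact: sh_linr.
- exact: (islin_comp (sh_linr _) (sh_linr _)).
exact: shA_w.
Qed.

Fixpoint Dacc (k : nat) (s : seq nat) : M :=
  match s with
  | [::] => << [:: k] >>
  | l :: s' => cns k (Dacc l s') + Dacc (k + l) s'
  end.
Definition Dw (s : seq nat) : M := if s is k :: s' then Dacc k s' else << [::] >>.

Lemma Dw_nil : Dw [::] = << [::] >>. Proof. by []. Qed.

Lemma Dacc_exp k s :
  Dacc k s = \sum_(0 <= i < (size s).+1) cns (k + sumn (take i s)) (Dw (drop i s)).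
Proof.
elim: s k => [|l s IH] k.
  by rewrite big_nat1 take0 drop0 addn0 Dw_nil cnsU.
rewrite big_nat_recl // take0 drop0 addn0 [Dacc _ _]/= [Dacc (k + l) s]IH.
congr (_ + _); apply: eq_bigr => i _.
by rewrite [take _ _]/= [drop _ _]/= [sumn _]/= addnA.
Qed.

Lemma Dw_exp s : s != [::] ->
  Dw s = \sum_(0 <= i < size s) cns (sumn (take i.+1 s)) (Dw (drop i.+1 s)).
Proof.
case: s => [//|k s] _; rewrite [Dw _]/= Dacc_exp [size _]/=.
by apply: eq_bigr => i _.
Qed.

Definition Tm t j := sh << rev (take j t) >> (Dw (drop j t)).
Definition Vm t j := \sum_(0 <= i < size t - j)
  cns (sumn (take i.+1 (drop j t))) (sh << rev (take j t) >> (Dw (drop (j + i.+1) t))).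

Lemma T0 t : t != [::] -> Tm t 0 = Vm t 0.
Proof.
move=> tn; rewrite /Tm /Vm take0 drop0 subn0 [rev [::]]/= sh1l (Dw_exp t tn).
apply: eq_bigr => i _; by rewrite sh1l add0n.
Qed.

Lemma Tstep t j : (j < size t)%N -> Tm t j.+1 = Vm t j + Vm t j.+1.
Proof.
move=> hj; rewrite /Tm /Vm.
rewrite (take_nth 0 hj) rev_rcons -[<< _ :: rev _ >>]cnsU.
set x := nth 0 t j; set P := << rev (take j t) >>.
have ed : drop j t = x :: drop j.+1 t by rewrite (drop_nth 0 hj).
have hsz : (size t - j = (size (drop j.+1 t)).+1)%N by rewrite size_drop; lia.
have hsz' : (size t - j.+1 = size (drop j.+1 t))%N by rewrite size_drop.
rewrite hsz hsz' big_nat_recl // ed.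
set s := drop j.+1 t.
have edd i : drop (j + i.+2) t = drop i.+1 s by rewrite /s drop_drop; congr drop; lia.
have edd' i : drop (j.+1 + i.+1) t = drop i.+1 s by rewrite /s drop_drop; congr drop; lia.
rewrite addn1 -/s.
under eq_bigr do rewrite edd.
under [X in _ = _ + X]eq_bigr do rewrite edd'.
have e1 : sumn (take 1 (x :: s)) = x by case: (s) => [|? ?]; rewrite /= addn0.
have e2 i : sumn (take i.+2 (x :: s)) = (x + sumn (take i.+1 s))%N by [].
rewrite e1; under eq_bigr do rewrite e2.
case: (eqVneq s [::]) => [se|sn].
  by rewrite se !big_geq // !addr0 Dw_nil !sh1r.
rewrite {1}(Dw_exp s sn) (islin_sum (sh_linr _)).
rewrite (eq_bigr _ (fun i _ => sh_cons _ _ _ _)).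
rewrite !big_split.
rewrite -(islin_sum (cns_lin x)) -(islin_sum (sh_linr P)) -(Dw_exp s sn).
by rewrite addrAC.
Qed.

Lemma tele (W : nat -> M) n :
  \sum_(0 <= j < n) (-1) ^+ j.+1 *: (W j + W j.+1) = - W 0%N + (-1) ^+ n *: W n.
Proof.
elim: n => [|n IH]; first by rewrite big_geq // expr0 scale1r addNr.
rewrite big_nat_recr //= IH scalerDr exprS mulN1r scaleNr.
by rewrite -addrA addNKr.
Qed.

Lemma antipode t : t != [::] ->
  \sum_(0 <= j < (size t).+1) (-1) ^+ j *: sh << rev (take j t) >> (Dw (drop j t)) = 0.
Proof.
move=> tn.
rewrite big_nat_recl // expr0 scale1r.
have -> : sh << rev (take 0 t) >> (Dw (drop 0 t)) = Vm t 0 by rewrite -T0.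
rewrite (@eq_big_nat _ _ _ 0 (size t) _ (fun j => (-1) ^+ j.+1 *: (Vm t j + Vm t j.+1))).
  rewrite tele; have -> : Vm t (size t) = 0 by rewrite /Vm subnn big_geq.
  by rewrite scaler0 addr0 addrN.
by move=> j /andP[_ hj]; rewrite -Tstep.
Qed.

Lemma tri_inner {V : zmodType} (F : nat -> nat -> V) m j : (j <= m)%N ->
  \sum_(0 <= k < (m - j).+1) F j k = \sum_(0 <= k < m.+1 | (j + k <= m)%N) F j k.
Proof.
move=> hj; rewrite (big_nat_widen _ _ (m.+1)); last by lia.
apply: eq_bigl => k /=; apply/idP/idP; lia.
Qed.

Lemma tri {V : zmodType} (F : nat -> nat -> V) m :
  \sum_(0 <= j < m.+1) \sum_(0 <= k < (m - j).+1) F j k =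
  \sum_(0 <= k < m.+1) \sum_(0 <= j < (m - k).+1) F j k.
Proof.
rewrite (@eq_big_nat _ _ _ 0 m.+1 _ (fun j => \sum_(0 <= k < m.+1 | (j + k <= m)%N) F j k)); last first.
  by move=> j /andP[_ hj]; apply: tri_inner; lia.
rewrite [RHS](@eq_big_nat _ _ _ 0 m.+1 _ (fun k => \sum_(0 <= j < m.+1 | (j + k <= m)%N) F j k)); last first.
  move=> k /andP[_ hk]; rewrite (tri_inner (fun k j => F j k)); last by lia.
  by apply: eq_bigl => j; rewrite addnC.
rewrite (eq_bigr (fun j => \sum_(0 <= k < m.+1) (if (j + k <= m)%N then F j k else 0))); last first.
  by move=> j _; rewrite big_mkcond.
rewrite [RHS](eq_bigr (fun k => \sum_(0 <= j < m.+1) (if (j + k <= m)%N then F j k else 0))); last first.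
  by move=> k _; rewrite big_mkcond.
exact: exchange_big_nat.
Qed.

Lemma take_t (c : nat) m j (s : seq nat) : (j <= m)%N -> take j (nseq m c ++ s) = nseq j c.
Proof. by move=> hj; rewrite takel_cat ?size_nseq // take_nseq. Qed.

Lemma drop_t (c : nat) m j (s : seq nat) : (j <= m)%N ->
  drop j (nseq m c ++ s) = nseq (m - j) c ++ s.
Proof.
move=> hj; rewrite drop_cat size_nseq; case: ltnP => h; first by rewrite drop_nseq.
have -> : j = m by lia.
by rewrite subnn drop0.
Qed.

Lemma take_t2 (a b c : nat) m n l : (l <= n)%N ->
  take (l + m.+1) (nseq m c ++ b :: nseq n a) = nseq m c ++ b :: nseq l a.
Proof.
move=> hl; rewrite take_cat size_nseq.
have -> : (l + m.+1 < m)%N = false by lia.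
have -> : (l + m.+1 - m = l.+1)%N by lia.
by rewrite /= take_nseq.
Qed.

Lemma drop_t2 (a b c : nat) m n l :
  drop (l + m.+1) (nseq m c ++ b :: nseq n a) = nseq (n - l) a.
Proof.
rewrite drop_cat size_nseq.
have -> : (l + m.+1 < m)%N = false by lia.
have -> : (l + m.+1 - m = l.+1)%N by lia.
by rewrite /= drop_nseq.
Qed.

Lemma rev_A (a b c : nat) m l :
  rev (nseq m c ++ b :: nseq l a) = nseq l a ++ b :: nseq m c.
Proof. by rewrite rev_cat rev_cons rev_nseq rev_nseq cat_rcons. Qed.

Lemma Zc (c p : nat) :
  \sum_(0 <= j < p.+1) (-1) ^+ j *: sh << nseq j c >> (Dw (nseq (p - j) c)) =
  if p == 0%N then << [::] >> else 0.
Proof.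
case: p => [|p].
  by rewrite big_nat1 expr0 scale1r sh1l.
have -> : (p.+1 == 0%N) = false by [].
rewrite -[RHS](antipode (nseq p.+1 c)) // size_nseq.
apply: eq_big_nat => j /andP[_ hj].
by rewrite take_nseq 1?rev_nseq ?drop_nseq //; lia.
Qed.

Lemma shift_sum {V : zmodType} (F : nat -> V) k N :
  \sum_(k <= i < k + N) F i = \sum_(0 <= i < N) F (i + k).
Proof. by have := big_addn 0 (k + N) k xpredT F; rewrite add0n addKn. Qed.

Section Main.
Variables a b c n : nat.

Definition Av l k := nseq l a ++ b :: nseq k c.
Definition Xv m := Dw (nseq m c ++ b :: nseq n a).
Definition Ev l := Dw (nseq (n - l) a).
Definition Yv k := \sum_(0 <= l < n.+1) (-1) ^+ l *: sh << Av l k >> (Ev l).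
Definition Rv m := \sum_(0 <= k < m.+1) \sum_(0 <= l < n.+1)
  (-1) ^+ (k + l) *: sh (sh << Av l k >> (Dw (nseq (m - k) c))) (Ev l).

Lemma A_eq m :
  \sum_(0 <= j < m.+1) (-1) ^+ j *: sh << nseq j c >> (Xv (m - j)) = (-1) ^+ m *: Yv m.
Proof.
set t := nseq m c ++ b :: nseq n a.
have tn : t != [::] by rewrite /t; case: (m).
have H := antipode t tn.
have hst : (size t).+1 = (m.+1 + n.+1)%N.
  rewrite /t size_cat /= !size_nseq; lia.
rewrite hst (big_cat_nat _ (n := m.+1)) //= in H; last by lia.
rewrite (shift_sum _ m.+1 n.+1) in H.
have e1 : \sum_(0 <= j < m.+1) (-1) ^+ j *: sh << rev (take j t) >> (Dw (drop j t)) =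
    \sum_(0 <= j < m.+1) (-1) ^+ j *: sh << nseq j c >> (Xv (m - j)).
  apply: eq_big_nat => j /andP[_ hj].
  by rewrite /t take_t ?drop_t ?rev_nseq //; lia.
have e2 : \sum_(0 <= l < n.+1) (-1) ^+ (l + m.+1) *: sh << rev (take (l + m.+1) t) >>
      (Dw (drop (l + m.+1) t)) = - ((-1) ^+ m *: Yv m).
  rewrite /Yv scaler_sumr -sumrN; apply: eq_big_nat => l /andP[_ hl].
  rewrite /t take_t2 ?drop_t2 ?rev_A; last by lia.
  by rewrite exprD exprS mulN1r mulrN scaleNr scalerA mulrC.
rewrite e1 e2 in H.
by move/eqP: H; rewrite addr_eq0 opprK => /eqP.
Qed.

Lemma re4 C A D E : sh C (sh (sh A D) E) = sh (sh A E) (sh C D).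
Proof.
by rewrite (shA A D) (shC D E) -(shA A E D) (shC C) (shA (sh A E) D C) (shC D C).
Qed.

Lemma B_eq m :
  \sum_(0 <= j < m.+1) (-1) ^+ j *: sh << nseq j c >> (Rv (m - j)) = (-1) ^+ m *: Yv m.
Proof.
pose G k l j := (-1) ^+ (k + l) *: sh (sh << Av l k >> (Ev l))
  ((-1) ^+ j *: sh << nseq j c >> (Dw (nseq (m - k - j) c))).
rewrite (@eq_big_nat _ _ _ 0 m.+1 _
   (fun j => \sum_(0 <= k < (m - j).+1) \sum_(0 <= l < n.+1) G k l j)); last first.
  move=> j _; rewrite /Rv (islin_sum (sh_linr _)) scaler_sumr.
  apply: eq_big_nat => k _; rewrite (islin_sum (sh_linr _)) scaler_sumr.
  apply: eq_bigr => l _; rewrite /G (islinZ (sh_linr _)) re4 (islinZ (sh_linr _)).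
  by rewrite !scalerA mulrC subnAC.
rewrite (tri (fun j k => \sum_(0 <= l < n.+1) G k l j)).
rewrite (@eq_big_nat _ _ _ 0 m.+1 _ (fun k => if (m - k == 0)%N then
    \sum_(0 <= l < n.+1) (-1) ^+ (k + l) *: sh (sh << Av l k >> (Ev l)) << [::] >>
    else 0)); last first.
  move=> k _; rewrite exchange_big_nat.
  transitivity (\sum_(0 <= l < n.+1) (-1) ^+ (k + l) *: sh (sh << Av l k >> (Ev l))
     (\sum_(0 <= j < (m - k).+1) (-1) ^+ j *: sh << nseq j c >> (Dw (nseq (m - k - j) c)))).
    apply: eq_bigr => l _; rewrite (islin_sum (sh_linr _)) scaler_sumr.
    by apply: eq_bigr.
  rewrite Zc; case: eqP => _ //.
  by rewrite big1 // => l _; rewrite (islin0 (sh_linr _)) scaler0.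
rewrite big_nat_recr // subnn eqxx big1_seq ?add0r; last first.
  move=> k; rewrite mem_index_iota => /andP[_ hk].
  by have -> : (m - k == 0)%N = false by lia.
rewrite /= add0r /Yv scaler_sumr; apply: eq_bigr => l _.
by rewrite sh1r exprD scalerA.
Qed.

Lemma X_eq_R m : Xv m = Rv m.
Proof.
elim/ltn_ind: m => m IH.
have HA := A_eq m; rewrite -B_eq in HA.
rewrite !big_nat_recl // in HA.
rewrite [X in _ + X = _](@eq_big_nat _ _ _ 0 m _
   (fun j => (-1) ^+ j.+1 *: sh << nseq j.+1 c >> (Rv (m - j.+1)))) in HA; last first.
  by move=> j /andP[_ hj]; rewrite IH //; lia.
rewrite subn0 expr0 !scale1r [nseq 0 c]/= !sh1l in HA.
exact: (addIr _ HA).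
Qed.
End Main.

Notation WM := {malg rat[word]}.

Definition Phi (p : Defs.poly) : WM := \sum_(cw <- p) cw.1 *: << cw.2 >>.

Lemma coef_Phi p w : coef p w = (Phi p)@_w.
Proof.
rewrite /coef /Phi raddf_sum big_mkcond /=; apply: eq_bigr => cw _.
by rewrite mcoeffZ mcoeffU; case: eqP => //= _; rewrite ?mulr1 ?mulr0.
Qed.

Lemma peq_Phi p q : Phi p = Phi q -> peq p q.
Proof. by move=> e w; rewrite !coef_Phi e. Qed.

Lemma Phi_cat p q : Phi (p ++ q) = Phi p + Phi q.
Proof. by rewrite /Phi big_cat. Qed.

Lemma Phi_flatten (ps : seq Defs.poly) : Phi (flatten ps) = \sum_(p <- ps) Phi p.
Proof.
elim: ps => [|p ps IH]; first by rewrite /Phi !big_nil.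
by rewrite /= Phi_cat IH big_cons.
Qed.

Lemma Phi_scale a p : Phi (pscale a p) = a *: Phi p.
Proof.
rewrite /Phi /pscale big_map scaler_sumr; apply: eq_bigr => cw _.
by rewrite scalerA.
Qed.

Lemma Phi_pword w : Phi (pword w) = << w >>.
Proof. by rewrite /Phi big_seq1 scale1r. Qed.

Lemma Phi_map (T : Type) (r : seq T) (f : T -> rat) (g : T -> word) :
  Phi [seq (f x, g x) | x <- r] = \sum_(x <- r) f x *: << g x >>.
Proof. by rewrite /Phi big_map. Qed.

Lemma lin_sumU {K : choiceType} {V : lmodType rat} (h : K -> V) (T : Type) (r : seq T)
  (f : T -> rat) (g : T -> K) :
  lin h (\sum_(x <- r) f x *: << g x >>) = \sum_(x <- r) f x *: h (g x).
Proof.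
rewrite (islin_sum (lin_islin h)); apply: eq_bigr => x _.
by rewrite linZ linU1.
Qed.

Definition psi : M -> WM := lin (fun s => << fromz s >>).
Definition Tz : WM -> M := lin (fun w => << toz w >>).

Lemma psi_lin : islin psi. Proof. exact: lin_islin. Qed.
Lemma Tz_lin : islin Tz. Proof. exact: lin_islin. Qed.

Lemma psi_st u v : psi (st u v) = \sum_(e <- stuffle u v) e.1 *: << fromz e.2 >>.
Proof. by rewrite st.unlock /psi lin_sumU. Qed.

Lemma Tz_Phi p : Tz (Phi p) = \sum_(cw <- p) cw.1 *: << toz cw.2 >>.
Proof. by rewrite /Phi /Tz lin_sumU. Qed.

Lemma Phi_harm p q : Phi (harm p q) = psi (sh (Tz (Phi p)) (Tz (Phi q))).
Proof.
rewrite /harm Phi_flatten big_flatten big_map.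
rewrite !Tz_Phi (islin_sum (sh_linl _)) (islin_sum psi_lin).
apply: eq_bigr => cw _; rewrite big_map.
rewrite (islinZ (sh_linl _)) (islin_sum (sh_linr _)) scaler_sumr (islin_sum psi_lin).
apply: eq_bigr => dv _.
rewrite (islinZ (sh_linr _)) shUU !(islinZ psi_lin) psi_st Phi_map.
rewrite scalerA (scaler_sumr (cw.1 * dv.1)); apply: eq_bigr => e _.
by rewrite scalerA.
Qed.

Definition pos (s : seq nat) := all (fun k => 0 < k)%N s.
Definition posM (F : M) := forall s, s \in msupp F -> pos s.

Lemma mcoeff_lin {K : choiceType} (h : K -> M) g s :
  (lin h g)@_s = \sum_(k <- msupp g) g@_k * (h k)@_s.
Proof. by rewrite lin.unlock; elim/big_rec2: _ => [|k x y _ <-]; rewrite ?mcoeff0 ?mcoeffD ?mcoeffZ. Qed.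

Lemma posM_coef F s : posM F -> ~~ pos s -> F@_s = 0.
Proof. by move=> hF hs; apply: mcoeff_outdom; apply: contra hs; apply: hF. Qed.

Lemma posM_coefP F : (forall s, ~~ pos s -> F@_s = 0) -> posM F.
Proof.
move=> h s; rewrite -mcoeff_neq0; apply: contraR => hs; apply/eqP; exact: h.
Qed.

Lemma posM_lin {K : choiceType} (h : K -> M) g :
  (forall k, k \in msupp g -> posM (h k)) -> posM (lin h g).
Proof.
move=> hh; apply: posM_coefP => s hs; rewrite mcoeff_lin big_seq big1 // => k kg.
by rewrite (posM_coef _ _ (hh k kg) hs) mulr0.
Qed.

Lemma posM_add F G : posM F -> posM G -> posM (F + G).
Proof.
move=> hF hG; apply: posM_coefP => s hs.
by rewrite mcoeffD (posM_coef _ _ hF hs) (posM_coef _ _ hG hs) addr0.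
Qed.

Lemma posM_U s : pos s -> posM << s >>.
Proof.
move=> hs; apply: posM_coefP => s' hs'; rewrite mcoeffU.
by case: eqP => // e; rewrite -e hs in hs'.
Qed.

Lemma posM_cns k F : (0 < k)%N -> posM F -> posM (cns k F).
Proof.
move=> hk hF; rewrite cns.unlock; apply: posM_lin => s /hF hs.
by apply: posM_U; rewrite /pos /= hk.
Qed.

Lemma posM_st u v : pos u -> pos v -> posM (st u v).
Proof.
move: {2}(size u + size v)%N (leqnn (size u + size v)%N) => n.
elim: n u v => [|n IH] [|k u] [|l v] // hs hu hv; rewrite ?st_nill ?st_nilr;
  try exact: posM_U.
rewrite st_cons; move: hu hv; rewrite /pos /= => /andP[hk hu] /andP[hl hv].
have h1 : (size u + size (l :: v) <= n)%N by move: hs; rewrite /= addSn ltnS.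
have h2 : (size (k :: u) + size v <= n)%N by move: hs; rewrite /= addnS ltnS.
have h3 : (size u + size v <= n)%N by apply: leq_trans h1; rewrite /= leq_add2l.
apply: posM_add; first apply: posM_add; apply: posM_cns.
- by [].
- by apply: IH => //; rewrite /pos /= hl.
- by [].
- by apply: IH => //; rewrite /pos /= hk.
- by rewrite addn_gt0 hk.
- exact: IH.
Qed.

Lemma posM_sh F G : posM F -> posM G -> posM (sh F G).
Proof.
move=> hF hG; rewrite sh.unlock; apply: posM_lin => u /hF hu.
apply: posM_lin => v /hG hv; exact: posM_st.
Qed.

Lemma posM_Dacc k s : (0 < k)%N -> pos s -> posM (Dacc k s).
Proof.
elim: s k => [|l s IH] k hk; first by move=> _; apply: posM_U; rewrite /pos /= hk.
rewrite /pos /= => /andP[hl hs].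
apply: posM_add; first by apply: posM_cns => //; apply: IH.
by apply: IH => //; rewrite addn_gt0 hk.
Qed.

Lemma posM_Dw s : pos s -> posM (Dw s).
Proof.
case: s => [|k s]; first by move=> _; apply: posM_U.
by rewrite /pos /= => /andP[hk hs]; apply: posM_Dacc.
Qed.

Lemma lin_comp {K K' : choiceType} {V : lmodType rat} (f : {malg rat[K']} -> V)
  (h : K -> {malg rat[K']}) g :
  islin f -> f (lin h g) = lin (fun k => f (h k)) g.
Proof.
move=> hf; rewrite lin.unlock (islin_sum hf); apply: eq_bigr => k _.
by rewrite (islinZ hf).
Qed.

Lemma eq_lin_supp {K : choiceType} {V : lmodType rat} (h1 h2 : K -> V) g :
  (forall k, k \in msupp g -> h1 k = h2 k) -> lin h1 g = lin h2 g.
Proof. by move=> e; rewrite lin.unlock; apply: eq_big_seq => k kg; rewrite e. Qed.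

Lemma fromz_cons k s : fromz (k :: s) = nseq k.-1 lx ++ ly :: fromz s.
Proof. by rewrite /fromz /= /z cat_rcons. Qed.

Lemma toz_aux_nseq m j w : toz_aux m (nseq j lx ++ w) = toz_aux (m + j) w.
Proof. by elim: j m => [|j IH] m; rewrite ?addn0 //= IH addnS. Qed.

Lemma toz_fromz s : pos s -> toz (fromz s) = s.
Proof.
elim: s => [//|k s IH]; rewrite /pos /= => /andP[hk hs].
rewrite fromz_cons /toz toz_aux_nseq add0n /=.
by rewrite -/(toz (fromz s)) IH // prednK.
Qed.

Lemma TzK F : posM F -> Tz (psi F) = F.
Proof.
move=> hF; rewrite /psi (lin_comp _ _ _ Tz_lin).
rewrite -[RHS]lin_id; apply: eq_lin_supp => s hs.
by rewrite /Tz linU1 toz_fromz //; apply: hF.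
Qed.

Definition catL (u : word) : WM -> WM := lin (fun v => << u ++ v >>).
Definition catR (v : word) : WM -> WM := lin (fun u => << u ++ v >>).
Lemma catL_lin u : islin (catL u). Proof. exact: lin_islin. Qed.
Lemma catR_lin v : islin (catR v). Proof. exact: lin_islin. Qed.
Lemma catLU u v : catL u << v >> = << u ++ v >>. Proof. exact: linU1. Qed.
Lemma catRU u v : catR v << u >> = << u ++ v >>. Proof. exact: linU1. Qed.

Lemma catLR u v F : catR v (catL u F) = catL u (catR v F).
Proof.
move: F; apply: (islin_eq (fun F => catR v (catL u F)) (fun F => catL u (catR v F))).
- exact: (islin_comp (catR_lin v) (catL_lin u)).
- exact: (islin_comp (catL_lin u) (catR_lin v)).
by move=> w; rewrite catLU catRU catRU catLU catA.
Qed.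

Lemma catLL u1 u2 F : catL u1 (catL u2 F) = catL (u1 ++ u2) F.
Proof.
move: F; apply: (islin_eq (fun F => catL u1 (catL u2 F)) (fun F => catL (u1 ++ u2) F)).
- exact: (islin_comp (catL_lin _) (catL_lin _)).
- exact: catL_lin.
by move=> w; rewrite !catLU catA.
Qed.

Lemma catL0 F : catL [::] F = F.
Proof. by rewrite -[RHS]lin_id; apply: eq_lin. Qed.

Lemma Phi_pmul p q : Phi (pmul p q) = \sum_(cw <- p) cw.1 *: catL cw.2 (Phi q).
Proof.
rewrite /pmul Phi_flatten big_map; apply: eq_bigr => cw _.
rewrite Phi_map /Phi /catL lin_sumU (scaler_sumr cw.1); apply: eq_bigr => dv _.
by rewrite scalerA.
Qed.

Lemma Phi_pmul_word p v : Phi (pmul p (pword v)) = catR v (Phi p).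
Proof.
rewrite Phi_pmul Phi_pword /Phi /catR lin_sumU; apply: eq_bigr => cw _.
by rewrite catLU.
Qed.

Definition Q (w : word) := Phi (pmul (gamma_word w) (pword [:: ly])).

Lemma Q_cons b w : Q (b :: w) = \sum_(cw <- gamma_letter b) cw.1 *: catL cw.2 (Q w).
Proof.
rewrite /Q Phi_pmul_word [gamma_word _]/= Phi_pmul (islin_sum (catR_lin _)).
apply: eq_bigr => cw _; by rewrite (islinZ (catR_lin _)) catLR Phi_pmul_word.
Qed.

Lemma Q_x w : Q (lx :: w) = catL [:: lx] (Q w).
Proof. by rewrite Q_cons /= big_seq1 scale1r. Qed.

Lemma Q_y w : Q (ly :: w) = catL [:: lx] (Q w) + catL [:: ly] (Q w).
Proof. by rewrite Q_cons /= big_cons big_seq1 !scale1r. Qed.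

Lemma Q_nil : Q [::] = << [:: ly] >>.
Proof. by rewrite /Q Phi_pmul_word /= Phi_pword catRU. Qed.

Lemma Q_nseq j w : Q (nseq j lx ++ w) = catL (nseq j lx) (Q w).
Proof.
elim: j => [|j IH]; first by rewrite catL0.
by rewrite [nseq _ _ ++ _]/= Q_x IH catLL.
Qed.

Lemma psi_cns m F : psi (cns m F) = catL (z m) (psi F).
Proof.
move: F; apply: (islin_eq (fun F => psi (cns m F)) (fun F => catL (z m) (psi F))).
- exact: (islin_comp psi_lin (cns_lin m)).
- exact: (islin_comp (catL_lin _) psi_lin).
by move=> s; rewrite cnsU /psi !linU1 catLU.
Qed.

Fixpoint Uw (s : seq nat) : word :=
  if s is l :: s' then ly :: nseq l.-1 lx ++ Uw s' else [::].

Lemma fromz_U k s : fromz (k :: s) = rcons (nseq k.-1 lx ++ Uw s) ly.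
Proof.
elim: s k => [|l s IH] k; first by rewrite fromz_cons /= cats0 cats1.
by rewrite fromz_cons IH [Uw _]/= !rcons_cat rcons_cons rcons_cat.
Qed.

Lemma PG s j k : (0 < k)%N -> pos s ->
  Q (nseq j lx ++ nseq k.-1 lx ++ Uw s) = psi (Dacc (j + k) s).
Proof.
elim: s j k => [|l s IH] j k hk.
  move=> _; rewrite catA -nseqD Q_nseq Q_nil catLU /= /psi linU1 /fromz /= /z cats0.
  by rewrite cats1; congr (<< rcons (nseq _ _) _ >>); lia.
rewrite /pos /= => /andP[hl hs].
rewrite catA -nseqD [Uw _]/= Q_nseq Q_y.
rewrite (islinD (catL_lin _)) !catLL.
have e0 : (j + k.-1 = (j + k).-1)%N by lia.
have e1 : Q (nseq l.-1 lx ++ Uw s) = psi (Dacc l s) := IH 0%N l hl hs.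
have e2 : catL (nseq (j + k.-1) lx ++ [:: lx]) (Q (nseq l.-1 lx ++ Uw s)) =
   psi (Dacc ((j + k.-1).+1 + l) s).
  have -> : nseq (j + k.-1) lx ++ [:: lx] = nseq (j + k.-1).+1 lx.
    by rewrite -[[:: lx]]/(nseq 1 lx) -nseqD addn1.
  by rewrite -Q_nseq IH.
rewrite e2 e1.
have -> : nseq (j + k.-1) lx ++ [:: ly] = z (j + k) by rewrite /z e0 cats1.
have -> : ((j + k.-1).+1 + l = j + k + l)%N by lia.
by rewrite -psi_cns (islinD psi_lin) addrC.
Qed.

Lemma Phi_d_word s : pos s -> Phi (d (pword (fromz s))) = psi (Dw s).
Proof.
move=> hs; rewrite /d /pword /= cats0 Phi_scale scale1r.
case: s hs => [|k s]; first by move=> _; rewrite /d_word /= /psi /Dw linU1 Phi_pword.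
rewrite /pos /= => /andP[hk hs].
rewrite fromz_U /d_word.
have -> : (rcons (nseq k.-1 lx ++ Uw s) ly == [::]) = false.
  by case: (nseq _ _ ++ _).
rewrite last_rcons size_rcons /= -cats1 take_size_cat //.
by have := PG s 0 k hk hs; rewrite add0n.
Qed.

Lemma fromz_cat s1 s2 : fromz (s1 ++ s2) = fromz s1 ++ fromz s2.
Proof. by rewrite /fromz map_cat flatten_cat. Qed.

Lemma zpowE k j : zpow k j = fromz (nseq j k).
Proof. by rewrite /zpow /fromz map_nseq. Qed.

Lemma zE k : z k = fromz [:: k].
Proof. by rewrite /fromz /= cats0. Qed.

Lemma pos_nseq j k : (0 < k)%N -> pos (nseq j k).
Proof. by move=> hk; rewrite /pos all_nseq hk orbT. Qed.

Lemma pos_cat s1 s2 : pos (s1 ++ s2) = pos s1 && pos s2.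
Proof. exact: all_cat. Qed.

Lemma TzPhi_word s : pos s -> Tz (Phi (pword (fromz s))) = << s >>.
Proof. by move=> hs; rewrite Phi_pword /Tz linU1 toz_fromz. Qed.

Lemma TzPhi_d s : pos s -> Tz (Phi (d (pword (fromz s)))) = Dw s.
Proof. by move=> hs; rewrite Phi_d_word // TzK //; apply: posM_Dw. Qed.

Theorem proposition2p4 (a b c : nat) (ha : (0 < a)%N) (hb : (0 < b)%N) (hc : (0 < c)%N)
  (m n : nat) :
  peq (d (pword (zpow c m ++ z b ++ zpow a n)))
      (psum [seq pscale ((-1) ^+ (k + l))
                  (harm (harm (pword (zpow a l ++ z b ++ zpow c k))
                              (d (pword (zpow c (m - k)))))
                        (d (pword (zpow a (n - l)))))
            | k <- iota 0 m.+1, l <- iota 0 n.+1]).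
Proof.
apply: peq_Phi.
have hA l k : pos (Av a b c l k).
  by rewrite /Av pos_cat /= !pos_nseq // hb.
rewrite /psum Phi_flatten big_flatten big_map.
rewrite !zpowE zE -!fromz_cat Phi_d_word; last first.
  by rewrite !pos_cat /= !pos_nseq // hb.
rewrite [nseq m c ++ _]/= -/(Xv a b c n m) X_eq_R /Rv (islin_sum psi_lin).
rewrite /index_iota !subn0; apply: eq_bigr => k _.
rewrite big_map (islin_sum psi_lin); apply: eq_bigr => l _.
rewrite Phi_scale (islinZ psi_lin) Phi_harm Phi_harm !zpowE -!fromz_cat cat1s.
rewrite -/(Av a b c l k) TzPhi_word // !TzPhi_d ?pos_nseq //.
rewrite TzK //; apply: posM_sh; [exact: posM_U | apply: posM_Dw; exact: pos_nseq].
Qed.
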